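(* Let $\Omega\subset\mathbb{R}^n$ be open, let $(\alpha_i)$ be a sequence of regular monotone set functions on $\Omega$ weakly converging to a regular monotone set function $\alpha$, and let $K_j$ be a decreasing sequence of compact subsets of $\Omega$ with $K:=\bigcap_jK_j$ such that $\alpha(K)=0$. Then $$\lim_{j\to\infty}\limsup_{i\to\infty}\alpha_i(K_j)=0.$$
   Context: A set function $\alpha:\mathcal{P}(\Omega)\to[0,\infty]$ (defined on all subsets of $\Omega$) is monotone if $\alpha(E)\le\alpha(F)$ whenever $E\subset F$. A monotone $\alpha$ is regular if $\alpha(A)=\sup\{\alpha(K):K\subset A,\ K\text{ compact}\}$ for every open $A\subset\Omega$, and $\alpha(E)=\inf\{\alpha(A):E\subset A\subset\Omega,\ A\text{ open}\}$ for every $E\subset\Omega$. A sequence of regular monotone set functions $\alpha_i$ weakly converges to a monotone set function $\alpha$ if $\liminf_i\alpha_i(A)\ge\alpha(A)$ for every open $A\subset\Omega$ and $\limsup_i\alpha_i(K)\le\alpha(K)$ for every compact $K\subset\Omega$. *)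

(* Defs.v *)
(* R^n is modelled as 'rV[R]_n (its canonical normed topology). *)
From HB Require Import structures.
From mathcomp Require Import all_boot all_order all_algebra.
From mathcomp Require Import all_classical all_reals all_analysis.
Set Implicit Arguments. Unset Strict Implicit. Unset Printing Implicit Defensive.
Import Order.TTheory GRing.Theory Num.Theory.
Import numFieldTopology.Exports numFieldNormedType.Exports.
Local Open Scope classical_set_scope.
Local Open Scope ring_scope.
Local Open Scope ereal_scope.

Section SetFunctions.
Variables (R : realType) (n : nat).
Local Notation V := 'rV[R]_n.

(* alpha : P(Omega) -> [0, +oo], monotone; values outside P(Omega) are irrelevant *)
Definition monotone_sf (Omega : set V) (alpha : set V -> \bar R) : Prop :=
  (forall E : set V, E `<=` Omega -> 0 <= alpha E) /\
  (forall E F, E `<=` F -> F `<=` Omega -> alpha E <= alpha F).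

Definition regular_sf (Omega : set V) (alpha : set V -> \bar R) : Prop :=
  monotone_sf Omega alpha /\
  (forall A : set V, open A -> A `<=` Omega ->
     alpha A = ereal_sup (alpha @` [set K : set V | compact K /\ K `<=` A])) /\
  (forall E : set V, E `<=` Omega ->
     alpha E = ereal_inf (alpha @` [set A : set V | open A /\ E `<=` A /\ A `<=` Omega])).

Definition weakly_converges (Omega : set V) (alphas : nat -> set V -> \bar R)
    (alpha : set V -> \bar R) : Prop :=
  (forall i, regular_sf Omega (alphas i)) /\ monotone_sf Omega alpha /\
  (forall A : set V, open A -> A `<=` Omega -> alpha A <= limn_einf (fun i => alphas i A)) /\
  (forall K : set V, compact K -> K `<=` Omega -> limn_esup (fun i => alphas i K) <= alpha K).

End SetFunctions.

(* Main.v *)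
Require Import Defs.
From HB Require Import structures.
From mathcomp Require Import all_boot all_order all_algebra.
From mathcomp Require Import all_classical all_reals all_analysis.
Import Order.TTheory GRing.Theory Num.Theory.
Import numFieldTopology.Exports numFieldNormedType.Exports.
Local Open Scope classical_set_scope.
Local Open Scope ring_scope.
Local Open Scope ereal_scope.

Lemma dec_le {T : Type} {K : nat -> set T} :
  (forall j, K j.+1 `<=` K j) -> forall i j, (i <= j)%N -> K j `<=` K i.
Proof.
move=> dec i j /subnK <-; elim: (j - i)%N => [|k IH] //=.
by rewrite addSn; apply: subset_trans (dec _) IH.
Qed.

Lemma dec_compact_sub (T : ptopologicalType) (hT : hausdorff_space T)
  (K : nat -> set T) (A : set T) : (forall j, compact (K j)) ->
  (forall j, K j.+1 `<=` K j) -> open A -> \bigcap_j K j `<=` A ->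
  exists m, K m `<=` A.
Proof.
move=> cK dec oA KA.
have : cover_compact (K 0%N) by rewrite -compact_cover; exact: cK.
move=> /(_ nat setT (fun j => A `|` ~` K j)).
case.
- move=> j _; apply: openU => //; apply: closed_openC; exact: compact_closed.
- move=> x K0x; have [Ax|nAx] := pselect (A x).
    by exists 0%N => //; left.
  have [j nKj] : exists j, ~ K j x.
    apply: contrapT => H; apply: nAx; apply: KA => j _.
    by apply: contrapT => nK; apply: H; exists j.
  by exists j => //; right.
move=> D _ cov; exists (\max_(d <- finmap.enum_fset D) d)%N => x Kx.
have [d Dd [//|nKd]] := cov x (dec_le dec _ _ (leq0n _) _ Kx).
exfalso; apply: nKd; apply: (dec_le dec _ _ _ _ Kx).
by apply: (@leq_bigmax_seq _ _ xpredT id d).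
Qed.

Theorem proposition22 (R : realType) (n : nat) (Omega : set 'rV[R]_n)
  (alphas : nat -> set 'rV[R]_n -> \bar R) (alpha : set 'rV[R]_n -> \bar R)
  (Ks : nat -> set 'rV[R]_n) :
  open Omega ->
  (forall i, regular_sf Omega (alphas i)) ->
  regular_sf Omega alpha ->
  weakly_converges Omega alphas alpha ->
  (forall j, compact (Ks j) /\ Ks j `<=` Omega) ->
  (forall j, Ks j.+1 `<=` Ks j) ->
  alpha (\bigcap_j Ks j) = 0 ->
  (fun j => limn_esup (fun i => alphas i (Ks j))) @ \oo --> 0.
Proof.
move=> oO Ha [[a0 amon] [_ aouter]] [_ [_ [_ wK]]] cK dec aK0.
apply: limn_esup_le_cvg; last first.
  move=> j; apply: limf_esup_ge0; first exact: filter_not_empty.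
  by move=> i; have [[+ _] _] := Ha i; apply; exact: (cK j).2.
apply/lee_addgt0Pr => e e0; rewrite add0e.
have KO : \bigcap_j Ks j `<=` Omega.
  by move=> x Kx; apply: (cK 0%N).2; exact: Kx.
have := aouter _ KO; rewrite aK0 => infE.
have : ereal_inf (alpha @` [set A | open A /\ \bigcap_j Ks j `<=` A /\ A `<=` Omega])
   < e%:E by rewrite -infE lte_fin.
move=> /ereal_inf_lt [_ [A [oA [KA AO]] <-] aAe].
have hT : hausdorff_space 'rV[R]_n := @norm_hausdorff _ _.
have [m KmA] := dec_compact_sub _ hT _ _ (fun j => (cK j).1) dec oA KA.
rewrite /limn_esup /limf_esup.
apply: le_trans (ereal_inf_lbound _) _.
  exists [set j | (m <= j)%N] => //; exists m => //.
apply: ge_ereal_sup => _ [j /= mj <-].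
apply: le_trans (wK _ (cK j).1 (cK j).2) _.
apply: le_trans (ltW aAe).
apply: amon => //; exact: subset_trans (dec_le dec _ _ mj) KmA.
Qed.
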